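(* Let $n\in\mathbb{N}$, $A_n=\{(i,j)\in\mathbb{Z}^2:0\le i,j\le 14n\}$ and $\tau:\mathbb{R}^2\to\mathbb{R}^2$, $\tau(x,y)=(x,(28n)^y)$. Let $(a_1,b_1),(a_2,b_2),(a_3,b_3)\in A_n$ with $a_1<a_2<a_3$ and either $b_1<b_2<b_3$ or $b_3<b_2<b_1$. Then the point $\tau(a_2,b_2)$ lies strictly below the line segment between $\tau(a_1,b_1)$ and $\tau(a_3,b_3)$ (i.e., below the point of that segment with $x$-coordinate $a_2$). *)

(* Defs.v *)
From HB Require Import structures.
From mathcomp Require Import all_boot all_order all_algebra.
From mathcomp Require Import reals exp.
Set Implicit Arguments. Unset Strict Implicit. Unset Printing Implicit Defensive.
Import Order.TTheory GRing.Theory Num.Theory.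
Local Open Scope ring_scope.

Definition in_A (n : nat) (p : int * int) : Prop :=
  (0 <= p.1 <= (14 * n)%:Z) /\ (0 <= p.2 <= (14 * n)%:Z).

Definition tau {R : realType} (n : nat) (p : R * R) : R * R :=
  (p.1, powR (28 * n)%:R p.2).

Definition line_y {R : realType} (P Q : R * R) (x : R) : R :=
  P.2 + (Q.2 - P.2) * (x - P.1) / (Q.1 - P.1).

Definition embZ {R : realType} (p : int * int) : R * R := (p.1%:~R, p.2%:~R).

(* Main.v *)
Require Import Defs.
From HB Require Import structures.
From mathcomp Require Import all_boot all_order all_algebra.
From mathcomp Require Import reals exp.
From mathcomp Require Import ring lra.
Import Order.TTheory GRing.Theory Num.Theory.
Local Open Scope ring_scope.

Lemma incL (R: realFieldType) (y1 y2 y3 D a c : R): 0<y1 -> 0<y2 -> 1<=D -> 1<=a ->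
  2*(D*y2) <= c*y2 -> c*y1 <= y2 -> c*y2 <= y3 -> 1<=c -> (y2-y1)*D < (y3-y1)*a.
Proof.
move=> p1 p2 hD ha h1 h2 h3 hc.
have f1 : y1 <= y1 * D by rewrite ler_peMr; lra.
have f2 : 0 < D * y2 by apply: mulr_gt0; lra.
have f3 : c * y1 >= y1 by rewrite ler_peMl; lra.
have f4 : c * y2 >= y2 by rewrite ler_peMl; lra.
have f5 : (y3 - y1) * a >= y3 - y1 by rewrite ler_peMr; lra.
have -> : (y2 - y1) * D = D * y2 - y1 * D by ring.
lra.
Qed.
Lemma decL (R: realFieldType) (y1 y2 y3 D a b c : R): 0<y1 -> 0<y2 -> 0<y3 -> 1<=b -> 1<=a -> D = a + b ->
  2*(D*y2) <= c*y2 -> c*y2 <= y1 -> (y2-y1)*D < (y3-y1)*a.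
Proof.
move=> p1 p2 p3 hb ha -> h1 h2.
have f1 : y1 <= y1 * b by rewrite ler_peMr; lra.
have f2 : 0 < (a+b) * y2 by apply: mulr_gt0; lra.
have f3 : 0 < y3 * a by apply: mulr_gt0; lra.
have -> : (y2 - y1) * (a+b) = (a+b) * y2 - y1 * a - y1 * b by ring.
have -> : (y3 - y1) * a = y3 * a - y1 * a by ring.
lra.
Qed.

Lemma pow_step (R : realType) (c : R) (u v : int) : 1 <= c -> u < v ->
  c * powR c (u%:~R) <= powR c (v%:~R).
Proof.
move=> c1 uv.
have c0 : 0 <= c by lra.
have -> : c * powR c u%:~R = powR c (u%:~R + 1).
  rewrite powRD; last by rewrite implybE; apply/orP; right; rewrite gt_eqF //; lra.
  by rewrite powRr1 // mulrC.
apply: (ler_powR c1).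
have : u + 1 <= v by rewrite lezD1.
by rewrite -(ler_int R) intrD.
Qed.

Theorem lemma7 (R : realType) (n : nat) (p1 p2 p3 : int * int) :
  in_A n p1 -> in_A n p2 -> in_A n p3 ->
  p1.1 < p2.1 < p3.1 ->
  (p1.2 < p2.2 < p3.2) \/ (p3.2 < p2.2 < p1.2) ->
  (tau n (embZ p2 : R * R)).2 <
    line_y (tau n (embZ p1)) (tau n (embZ p3)) (tau n (embZ p2 : R * R)).1.
Proof.
case: p1 p2 p3 => [a1 b1] [a2 b2] [a3 b3] /=.
rewrite /in_A /tau /line_y /embZ /=.
move=> [/andP[A1 A1'] _] _ [/andP[A3 A3'] _] /andP[a12 a23] hb.
set c : R := (28 * n)%:R.
have ha12 : (a1%:~R : R) + 1 <= a2%:~R.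
  have : a1 + 1 <= a2 by rewrite lezD1.
  by rewrite -(ler_int R) intrD.
have ha23 : (a2%:~R : R) + 1 <= a3%:~R.
  have : a2 + 1 <= a3 by rewrite lezD1.
  by rewrite -(ler_int R) intrD.
have hA1 : (0 : R) <= a1%:~R by rewrite ler0z.
have hA3 : (a3%:~R : R) <= (14 * n)%:R.
  by move: A3'; rewrite -(ler_int R).
have hc : (14 * n)%:R * 2 = c by rewrite /c -natrM mulnC mulnA.
have c1 : 1 <= c.
  have : (0 : R) < a3%:~R by lra.
  by lra.
set y1 := powR c b1%:~R; set y2 := powR c b2%:~R; set y3 := powR c b3%:~R.
have y1p : 0 < y1 by apply: powR_gt0; lra.
have y2p : 0 < y2 by apply: powR_gt0; lra.
have y3p : 0 < y3 by apply: powR_gt0; lra.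
set x1 : R := a1%:~R; set x2 : R := a2%:~R; set x3 : R := a3%:~R.
set N : R := (14 * n)%:R.
have D0 : 0 < x3 - x1 by rewrite /x1 /x3; lra.
rewrite -ltrBlDl ltr_pdivlMr //.
have hD : 2 * ((x3 - x1) * y2) <= c * y2.
  rewrite mulrA ler_pM2r //; rewrite /x1 /x3 -/N; lra.
have g1 : 1 <= x3 - x1 by rewrite /x1 /x3; lra.
have g2 : 1 <= x2 - x1 by rewrite /x1 /x2; lra.
have g3 : 1 <= x3 - x2 by rewrite /x2 /x3; lra.
have g4 : x3 - x1 = (x2 - x1) + (x3 - x2) by ring.
case: hb => /andP[h1 h2].
- have e1 := @pow_step R c _ _ c1 h2.
  have e2 := @pow_step R c _ _ c1 h1.
  exact: (@incL R y1 y2 y3 (x3 - x1) (x2 - x1) c y1p y2p g1 g2 hD e2 e1 c1).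
- have e1 := @pow_step R c _ _ c1 h2.
  have e2 := @pow_step R c _ _ c1 h1.
  exact: (@decL R y1 y2 y3 (x3 - x1) (x2 - x1) (x3 - x2) c y1p y2p y3p g3 g2 g4 hD e1).
Qed.
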